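(* Let $G=(V,\widetilde V,\mathcal E)$ be a bipartite graph with $V=\{v_1,\dots,v_r\}$, $\widetilde V=\{\tilde v_1,\dots,\tilde v_s\}$, $r\le s$, $\mathcal E\subseteq V\times\widetilde V$. Define structured matrices $\bar A\in\{0,*\}^{(s+2)\times(s+2)}$, $\bar B\in\{0,*\}^{(s+2)\times s}$, $\bar C\in\{0,*\}^{r\times(s+2)}$, $\bar K\in\{0,*\}^{s\times r}$ by: $\bar A_{ij}=*$ iff ($i=2$) or ($j=2$) or ($i\in\{3,\dots,s-r+2\}$ and $j\in\{3,\dots,s+2\}$); $\bar B_{ij}=*$ iff $i\in\{s-r+3,\dots,s+2\}$ (any $j$); $\bar C_{ij}=*$ iff $j\in\{3,\dots,s+2\}$ (any $i$); $\bar K_{ij}=*$ iff $(v_j,\tilde v_i)\in\mathcal E$. If $G$ has a perfect matching (a matching of size $r$), then the closed-loop system bipartite graph $\mathcal B(\bar A,\bar B,\bar C,\bar K)$ has a perfect matching.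
   Context: A structured matrix has entries in $\{0,*\}$. For $\bar A\in\{0,*\}^{n\times n}$, $\bar B\in\{0,*\}^{n\times m}$, $\bar C\in\{0,*\}^{p\times n}$, $\bar K\in\{0,*\}^{m\times p}$, the closed-loop system bipartite graph $\mathcal B(\bar A,\bar B,\bar C,\bar K)$ has left vertex set $\{x'_1,\dots,x'_n,u'_1,\dots,u'_m,y'_1,\dots,y'_p\}$, right vertex set $\{x_1,\dots,x_n,u_1,\dots,u_m,y_1,\dots,y_p\}$, and edges: $(x'_j,x_i)$ iff $\bar A_{ji}=*$; $(x'_i,u_j)$ iff $\bar B_{ij}=*$; $(y'_j,x_i)$ iff $\bar C_{ji}=*$; $(u'_i,y_j)$ iff $\bar K_{ij}=*$ (these are the feedback edges, set $\mathcal E_K$); $(u'_i,u_i)$ for all $i\le m$; $(y'_i,y_i)$ for all $i\le p$. A perfect matching is a matching covering every left vertex (both sides have $n+m+p$ vertices). *)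

(* Defs.v *)
From mathcomp Require Import all_boot.
Set Implicit Arguments. Unset Strict Implicit. Unset Printing Implicit Defensive.

(* A structured matrix in {0,*}^(a x b): entry true means '*', false means 0.
   Indices are 0-based ordinals: ordinal k corresponds to the paper's index k+1. *)
Definition smat (a b : nat) := 'I_a -> 'I_b -> bool.

(* Vertex type used for both sides of the closed-loop bipartite graph:
   inl i          ~ x_i  (resp. x'_i)
   inr (inl i)    ~ u_i  (resp. u'_i)
   inr (inr i)    ~ y_i  (resp. y'_i) *)
Definition vtx (n m p : nat) := ('I_n + ('I_m + 'I_p))%type.

Definition cl_edge (n m p : nat) (A : smat n n) (B : smat n m) (C : smat p n)
  (K : smat m p) (l r : vtx n m p) : bool :=
  match l, r with
  | inl j, inl i => A j i                 (* (x'_j, x_i) iff A_ji = * *)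
  | inl i, inr (inl j) => B i j           (* (x'_i, u_j) iff B_ij = * *)
  | inr (inr j), inl i => C j i           (* (y'_j, x_i) iff C_ji = * *)
  | inr (inl i), inr (inr j) => K i j     (* (u'_i, y_j) iff K_ij = * *)
  | inr (inl i), inr (inl j) => i == j    (* (u'_i, u_i) *)
  | inr (inr i), inr (inr j) => i == j    (* (y'_i, y_i) *)
  | _, _ => false
  end.

Definition is_matching (L R : finType) (e : L -> R -> bool) (M : {set L * R}) : bool :=
  [forall x in M, e x.1 x.2] &&
  [forall x in M, forall y in M, ((x.1 == y.1) || (x.2 == y.2)) ==> (x == y)].

Definition is_perfect_matching (L R : finType) (e : L -> R -> bool) (M : {set L * R}) : bool :=
  is_matching e M && [forall l : L, exists r : R, (l, r) \in M].

Definition Abar (r s : nat) : smat s.+2 s.+2 := fun i j =>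
  [|| (i == 1 :> nat), (j == 1 :> nat) | [&& 2 <= i, i <= s - r + 1 & 2 <= j]].

Definition Bbar (r s : nat) : smat s.+2 s := fun i _ => s - r + 2 <= i.

Definition Cbar (r s : nat) : smat r s.+2 := fun _ j => 2 <= j.

(* K_ij = * iff (v_j, vt_i) in E; E j i encodes the edge (v_j, vt_i). *)
Definition Kbar (r s : nat) (E : 'I_r -> 'I_s -> bool) : smat s r := fun i j => E j i.

Arguments Abar : clear implicits.
Arguments Bbar : clear implicits.
Arguments Cbar : clear implicits.

(* Main.v *)
Require Import Defs.
From mathcomp Require Import all_boot.
From mathcomp Require Import zify.

Section Cons.
Variables (r s : nat) (sg : 'I_r -> 'I_s).

Definition ff (l : vtx s.+2 s r) : vtx s.+2 s r :=
  match l with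
  | inl i => if (i == 0 :> nat) then inl (inord 1)
             else if (i == 1 :> nat) then inl (inord 0)
             else if i <= s - r + 1 then inl (inord (i + r))
             else match insub (i - (s - r + 2)) with
                  | Some j => inr (inl (sg j))
                  | None => inl i end
  | inr (inl k) => match [pick j | sg j == k] with
                   | Some j => inr (inr j)
                   | None => inr (inl k) end
  | inr (inr j) => inl (inord (j + 2))
  end.
End Cons.

Theorem lemma1 (r s : nat) (E : 'I_r -> 'I_s -> bool) :
  r <= s ->
  (exists M : {set ('I_r * 'I_s)%type}, is_matching E M && (#|M| == r)) ->
  exists M : {set (vtx s.+2 s r * vtx s.+2 s r)%type},
    is_perfect_matching
      (cl_edge (Abar r s) (Bbar r s) (Cbar r s) (Kbar E)) M.
Proof.
move=> rs [M0 /andP[/andP[/forallP He /forallP Hm] /eqP cM]].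
have cov : forall j, exists k, (j, k) \in M0.
  move=> j.
  have inj : {in M0 &, injective (fun x : 'I_r * 'I_s => x.1)}.
    move=> x y xM yM exy.
    by have := Hm x; rewrite xM /= => /forallP /(_ y); rewrite yM exy eqxx /= => /eqP.
  have : (fun x : 'I_r * 'I_s => x.1) @: M0 = setT.
    by apply/eqP; rewrite eqEcard subsetT card_in_imset // cM cardsT card_ord leqnn.
  move=> hS; have : j \in setT by rewrite in_setT.
  rewrite -hS => /imsetP[[a b] abM /= ->].
  by exists b.
have [sg Hsg] := fin_all_exists cov.
have Esg : forall j, E j (sg j) by move=> j; by have := He (j, sg j); rewrite Hsg.
have sginj : injective sg.
  move=> a b eab.
  have := Hm (a, sg a); rewrite Hsg => /forallP /(_ (b, sg b)); rewrite Hsg /= eab eqxx orbT /=.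
  by move=> /eqP [].
pose f := @ff r s sg.
have fE : forall l, cl_edge (Abar r s) (Bbar r s) (Cbar r s) (Kbar E) l (f l).
  case=> [i|[k|j]] /=.
  - rewrite /f /ff; case: ifP => [/eqP i0|i0].
      by rewrite /Abar inordK //= orbT.
    case: ifP => [/eqP i1|i1].
      by rewrite /= /Abar i1.
    case: ifP => [imid|ihi].
      rewrite /= /Abar inordK; last by have := ltn_ord i; lia.
      apply/orP; right; apply/orP; right; apply/and3P; split; lia.
    case: insubP => [j _ _|]; first by rewrite /= /Bbar; lia.
    have := ltn_ord i; lia.
  - rewrite /f /ff; case: pickP => [j /eqP <-|_] /=; last by [].
    by rewrite /Kbar.
  - by rewrite /f /ff /= /Cbar inordK //; have := ltn_ord j; lia.
have inordE : forall n (x y : nat), x < n.+1 -> y < n.+1 -> (inord x : 'I_n.+1) = inord y -> x = y.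
  by move=> n x y hx hy H; have := congr1 (@nat_of_ord _) H; rewrite !inordK.
have finj : injective f.
  move=> [i|[k|j]] [i'|[k'|j']]; rewrite /f /ff;
  repeat first [case: ifP => ? | case: insubP => [? ? /= ?|?] | case: pickP => [? /eqP ?|?]];
  move=> H; try discriminate H; try (case: H => H).
  all: try (move/sginj: H => H).
  all: repeat match goal with Hf : (_ = false) |- _ => move/negbT: Hf => Hf end.
  all: repeat match goal with Hv : @eq nat (\val ?u) ?x |- _ => change (@eq nat (nat_of_ord u) x) in Hv; move: Hv => /= Hv end.
  all: try (have ? := ltn_ord i); try (have ? := ltn_ord i'); try (have ? := ltn_ord j);
       try (have ? := ltn_ord j'); try (have ? := ltn_ord k); try (have ? := ltn_ord k').
  all: try (have {H} := congr1 (@nat_of_ord _) H; rewrite ?inordK; try lia; move=> H).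
  all: try ((congr inl || congr (inr (inl _)) || congr (inr (inr _)) || idtac);
              apply: val_inj => /=; lia).
  all: try (exfalso; lia).
  all: try (congr inl; apply: val_inj => /=; lia).
  all: try (match goal with Hn : _ =1 xpred0, Hs : nat_of_ord (?g ?u) = _ |- _ => by have := Hn u; move=> /= /negbT /eqP Hne; exfalso; apply: Hne; apply: val_inj; exact: Hs end).
  all: try (match goal with Hn : _ =1 xpred0, Hs : _ = nat_of_ord (?g ?u) |- _ => by have := Hn u; move=> /= /negbT /eqP Hne; exfalso; apply: Hne; apply: val_inj; symmetry; exact: Hs end).
  all: try (subst; do 3 f_equal; apply: val_inj; exact: H).
exists [set (l, f l) | l : vtx s.+2 s r].
apply/andP; split; last first.
  by apply/forallP => l; apply/existsP; exists (f l); apply/imsetP; exists l.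
apply/andP; split.
  by apply/forallP => x; apply/implyP => /imsetP [l _ ->] /=.
apply/forallP => x; apply/implyP => /imsetP [l _ ->].
apply/forallP => y; apply/implyP => /imsetP [l' _ ->] /=.
apply/implyP => /orP [/eqP -> // | /eqP /finj -> //].
Qed.
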